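(* Let $\phi:\mathcal N_1\to\mathcal N_2$ be an admissible epi-functor between nested graphs. Then there exist a nested graph $\mathcal N_2'$, a merger $\mu:\mathcal N_1\to\mathcal N_2'$ and a contraction $\kappa:\mathcal N_2'\to\mathcal N_2$ such that $\phi=\kappa\circ\mu$ (such a decomposition is in general not unique).
   Context: A nested graph is a small category $\mathcal N$ for which there exists at least one functor $G:\mathcal N\to\underline n$ to a finite ordinal $\underline n$ (viewed as the category with a unique morphism $i\to j$ when $i\le j$ and none otherwise) sending every non-identity morphism to a non-identity morphism. Objects are called nodes. A flag is a non-identity morphism, said to be decorated by its domain. A flag is irreducible if it is not a composite of two flags. A vertex of a nested graph is a node that is not the domain of any flag; a corolla is a nested graph with exactly one vertex. A functor $\phi$ contracts a flag $f$ if $\phi(f)$ is an identity. A functor $\phi:\mathcal N_1\to\mathcal N_2$ between nested graphs is admissible if (1) for every irreducible flag $f$ of $\mathcal N_1$, $\phi(f)$ is an identity or an irreducible flag, and (2) for every irreducible flag $f:A\to B$ of $\mathcal N_1$ contracted by $\phi$, $\phi$ contracts every irreducible flag with domain $A$. An epi-functor $\phi:\mathcal N_1\to\mathcal N_2$ is a functor whose image generates all of $\mathcal N_2$. A merger is an admissible epi-functor $\mu:\mathcal N_1\to\mathcal N_2$ such that $\mathcal N_2$ is a quotient of $\mathcal N_1$ by an equivalence relation on the objects of $\mathcal N_1$. A contraction is an admissible epi-functor $\kappa:\mathcal N_1\to\mathcal N_2$ such that for every node $A_2$ of $\mathcal N_2$ the fiber $\kappa^{-1}(A_2)$ (objects mapped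 to $A_2$, morphisms mapped to the identity of $A_2$) is a corolla. *)

(* Defs.v *)
From mathcomp Require Import all_boot.
From Stdlib Require Import ProofIrrelevance Eqdep.

Set Implicit Arguments.
Unset Strict Implicit.
Unset Printing Implicit Defensive.

Record Category := {
  Obj :> Type;
  Hom : Obj -> Obj -> Type;
  idm : forall A, Hom A A;
  cmp : forall A B C, Hom B C -> Hom A B -> Hom A C;
  cmp_id_l : forall A B (f : Hom A B), cmp (idm B) f = f;
  cmp_id_r : forall A B (f : Hom A B), cmp f (idm A) = f;
  cmp_assoc : forall A B C D (h : Hom C D) (g : Hom B C) (f : Hom A B),
      cmp h (cmp g f) = cmp (cmp h g) f
}.
Arguments Hom {c} _ _.
Arguments idm {c} _.
Arguments cmp {c A B C} _ _.

Record Functor (C D : Category) := {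
  fobj :> C -> D;
  fmor : forall A B, Hom A B -> Hom (fobj A) (fobj B);
  fmor_id : forall A, fmor (idm A) = idm (fobj A);
  fmor_cmp : forall A B E (g : Hom B E) (f : Hom A B),
      fmor (cmp g f) = cmp (fmor g) (fmor f)
}.
Arguments fmor {C D} _ {A B} _.

Definition Arr (C : Category) := {p : C * C & Hom p.1 p.2}.
Definition arr {C : Category} {A B : C} (f : Hom A B) : Arr C :=
  existT (fun p : C * C => Hom p.1 p.2) (A, B) f.
Definition idarr {C : Category} (A : C) : Arr C := arr (idm A).
Definition dom {C : Category} (a : Arr C) : C := (projT1 a).1.

Definition farr {C D : Category} (F : Functor C D) (a : Arr C) : Arr D :=
  arr (fmor F (projT2 a)).

(* Equality of functors: they agree on every morphism (hence on objects). *)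
Definition functor_eq {C D : Category} (F G : Functor C D) : Prop :=
  forall a : Arr C, farr F a = farr G a.

Definition functor_comp {C D E : Category} (G : Functor D E) (F : Functor C D)
  : Functor C E.
Proof.
refine {| fobj := fun A => G (F A);
          fmor := fun A B f => fmor G (fmor F f) |}.
- by move=> A; rewrite !fmor_id.
- by move=> A B E' g f; rewrite !fmor_cmp.
Defined.

Definition ordinal_category (n : nat) : Category.
Proof.
refine {| Obj := 'I_n;
          Hom := fun i j => (nat_of_ord i <= nat_of_ord j)%N;
          idm := fun i => leqnn i;
          cmp := fun i j k g f => leq_trans f g |}.
- by move=> *; apply: eq_irrelevance.
- by move=> *; apply: eq_irrelevance.
- by move=> *; apply: eq_irrelevance.
Defined.

Definition is_identity {C : Category} (a : Arr C) : Prop :=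
  exists A : C, a = idarr A.

Definition is_flag {C : Category} (a : Arr C) : Prop := ~ is_identity a.

Definition irreducible {C : Category} (a : Arr C) : Prop :=
  is_flag a /\
  ~ (exists (A B E : C) (g : Hom B E) (f : Hom A B),
        is_flag (arr g) /\ is_flag (arr f) /\ a = arr (cmp g f)).

Definition nested_graph (N : Category) : Prop :=
  exists (n : nat) (G : Functor N (ordinal_category n)),
    forall a : Arr N, is_flag a -> is_flag (farr G a).

Definition is_vertex {N : Category} (A : N) : Prop :=
  forall a : Arr N, dom a = A -> ~ is_flag a.

Definition corolla (N : Category) : Prop :=
  nested_graph N /\ exists A : N, is_vertex A /\ forall B : N, is_vertex B -> B = A.

Definition contracts {C D : Category} (F : Functor C D) (a : Arr C) : Prop :=
  is_identity (farr F a).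

Definition admissible {C D : Category} (F : Functor C D) : Prop :=
  (forall a : Arr C, irreducible a ->
     is_identity (farr F a) \/ irreducible (farr F a)) /\
  (forall a : Arr C, irreducible a -> contracts F a ->
     forall b : Arr C, irreducible b -> dom b = dom a -> contracts F b).

Inductive generated {C D : Category} (F : Functor C D) : Arr D -> Prop :=
  | gen_img : forall a : Arr C, generated F (farr F a)
  | gen_cmp : forall (A B E : D) (g : Hom B E) (f : Hom A B),
      generated F (arr g) -> generated F (arr f) -> generated F (arr (cmp g f)).

Definition epi_functor {C D : Category} (F : Functor C D) : Prop :=
  forall a : Arr D, generated F a.

(* F : C -> D exhibits D as the quotient of C by the equivalence relation R
   on objects (universal property of the quotient category C/R). *)
Definition is_quotient_by {C D : Category} (F : Functor C D) (R : C -> C -> Prop)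
  : Prop :=
  (forall A B, R A B -> F A = F B) /\
  forall (E : Category) (H : Functor C E),
    (forall A B, R A B -> H A = H B) ->
    exists G : Functor D E,
      functor_eq (functor_comp G F) H /\
      forall G' : Functor D E, functor_eq (functor_comp G' F) H -> functor_eq G' G.

Definition is_equivalence {T : Type} (R : T -> T -> Prop) : Prop :=
  (forall x, R x x) /\ (forall x y, R x y -> R y x) /\
  (forall x y z, R x y -> R y z -> R x z).

Definition merger {C D : Category} (F : Functor C D) : Prop :=
  admissible F /\ epi_functor F /\
  exists R : C -> C -> Prop, is_equivalence R /\ is_quotient_by F R.

Lemma arr_cmp_id (C : Category) (X P Q S : C) (g : Hom Q S) (f : Hom P Q) :
  arr g = idarr X -> arr f = idarr X -> arr (cmp g f) = idarr X.
Proof.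
move=> Hg Hf.
have eQ : Q = X by move: (f_equal (fun a => (projT1 a).1) Hg).
have eS : S = X by move: (f_equal (fun a => (projT1 a).2) Hg).
have eP : P = X by move: (f_equal (fun a => (projT1 a).1) Hf).
subst.
have -> := inj_pair2 _ _ _ _ _ Hg.
have -> := inj_pair2 _ _ _ _ _ Hf.
by rewrite cmp_id_l.
Qed.

Definition fiber_hom {C D : Category} (F : Functor C D) (X : D)
  (a b : {A : C | F A = X}) : Type :=
  {f : Hom (proj1_sig a) (proj1_sig b) | arr (fmor F f) = idarr X}.

Lemma fiber_id_proof (C D : Category) (F : Functor C D) (X : D)
  (a : {A : C | F A = X}) : arr (fmor F (idm (proj1_sig a))) = idarr X.
Proof. by case: a => A e /=; rewrite fmor_id; subst. Qed.

Lemma sig_eq_irr (T : Type) (P : T -> Prop) (x y : {t | P t}) :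
  proj1_sig x = proj1_sig y -> x = y.
Proof.
case: x => x px; case: y => y py /= e; subst; congr exist; apply: proof_irrelevance.
Qed.

Lemma fiber_cmp_proof (C D : Category) (F : Functor C D) (X : D)
  (a b c : {A : C | F A = X}) (g : @fiber_hom C D F X b c) (f : @fiber_hom C D F X a b) :
  arr (fmor F (cmp (proj1_sig g) (proj1_sig f))) = idarr X.
Proof.
rewrite fmor_cmp; apply: arr_cmp_id; [exact: proj2_sig g | exact: proj2_sig f].
Qed.

Definition fiber {C D : Category} (F : Functor C D) (X : D) : Category.
Proof.
refine {| Obj := {A : C | F A = X};
          Hom := @fiber_hom C D F X;
          idm := fun a => exist _ (idm (proj1_sig a)) (@fiber_id_proof C D F X a);
          cmp := fun a b c g f =>
            exist _ (cmp (proj1_sig g) (proj1_sig f)) (@fiber_cmp_proof C D F X a b c g f) |}.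
- by move=> a b f; apply: sig_eq_irr; rewrite /= cmp_id_l.
- by move=> a b f; apply: sig_eq_irr; rewrite /= cmp_id_r.
- by move=> a b c d h g f; apply: sig_eq_irr; rewrite /= cmp_assoc.
Defined.

Definition contraction {C D : Category} (F : Functor C D) : Prop :=
  admissible F /\ epi_functor F /\ forall X : D, corolla (fiber F X).

(* Main.v *)
Require Import Defs.
From mathcomp Require Import all_boot.
From mathcomp Require Import zify.
From Stdlib Require Import ProofIrrelevance Eqdep ClassicalEpsilon Classical.

Set Implicit Arguments.
Unset Strict Implicit.
Unset Printing Implicit Defensive.

Definition dec (P : Prop) : {P} + {~ P} := excluded_middle_informative P.
Definition cod {C : Category} (a : Arr C) : C := (projT1 a).2.

Section General.
Variable C : Category.

Lemma arr_inj (A B : C) (f g : Hom A B) : arr f = arr g -> f = g.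
Proof. by move=> e; apply: (inj_pair2 _ _ _ _ _ e). Qed.

Lemma arr_flag (A B : C) (f : Hom A B) : A <> B -> is_flag (arr f).
Proof.
move=> ne [Z e]; apply: ne.
have e1 := f_equal (fun x : Arr C => (projT1 x).1) e.
have e2 := f_equal (fun x : Arr C => (projT1 x).2) e.
by rewrite /= in e1 e2; rewrite e1 e2.
Qed.

Definition comp_arr (b a : Arr C) : Arr C :=
  match dec (cod a = dom b) with
  | left e => arr (cmp (projT2 b)
       (eq_rect (cod a) (fun Z => Hom (dom a) Z) (projT2 a) (dom b) e))
  | right _ => a
  end.

Lemma comp_arr_arr (A B D : C) (f : Hom A B) (g : Hom B D) :
  comp_arr (arr g) (arr f) = arr (cmp g f).
Proof.
rewrite /comp_arr; case: dec => [e|n]; last by case: n.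
by rewrite (UIP_refl _ _ e).
Qed.

Lemma arr_decomp2 (a b : Arr C) : cod a = dom b ->
  exists (A B D : C) (f : Hom A B) (g : Hom B D), a = arr f /\ b = arr g.
Proof.
case: a => [[A B] f]; case: b => [[B' D] g]; rewrite /cod /dom /= => e.
subst B'. by exists A, B, D, f, g.
Qed.

Lemma comp_dom (a b : Arr C) : cod a = dom b -> dom (comp_arr b a) = dom a.
Proof.
move/arr_decomp2=> [A [B [D [f [g [-> ->]]]]]]. by rewrite comp_arr_arr.
Qed.

Lemma comp_cod (a b : Arr C) : cod a = dom b -> cod (comp_arr b a) = cod b.
Proof.
move/arr_decomp2=> [A [B [D [f [g [-> ->]]]]]]. by rewrite comp_arr_arr.
Qed.

Lemma comp_assoc (a b c : Arr C) : cod a = dom b -> cod b = dom c ->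
  comp_arr c (comp_arr b a) = comp_arr (comp_arr c b) a.
Proof.
move/arr_decomp2=> [A [B [D [f [g [-> ->]]]]]].
case: c => [[D' K] h]; rewrite /cod /dom /= => e; subst D'.
by rewrite !comp_arr_arr cmp_assoc.
Qed.

Lemma comp_idr (a : Arr C) X : dom a = X -> comp_arr a (idarr X) = a.
Proof.
case: a => [[A B] f]; rewrite /dom /= => e; subst X.
by rewrite /idarr comp_arr_arr cmp_id_r.
Qed.

Lemma comp_idl (a : Arr C) X : cod a = X -> comp_arr (idarr X) a = a.
Proof.
case: a => [[A B] f]; rewrite /cod /= => e; subst X.
by rewrite /idarr comp_arr_arr cmp_id_l.
Qed.

End General.

Lemma farr_comp (C D : Category) (F : Functor C D) (a b : Arr C) :
  cod a = dom b -> farr F (comp_arr b a) = comp_arr (farr F b) (farr F a).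
Proof.
move/arr_decomp2=> [A [B [E [f [g [-> ->]]]]]].
rewrite comp_arr_arr /farr /= fmor_cmp. by rewrite comp_arr_arr.
Qed.

Lemma farr_arr_cmp (C D : Category) (F : Functor C D) (A B E : C)
  (g : Hom B E) (f : Hom A B) :
  farr F (arr (cmp g f)) = comp_arr (farr F (arr g)) (farr F (arr f)).
Proof. by rewrite /farr /= fmor_cmp comp_arr_arr. Qed.

Lemma farr_id (C D : Category) (F : Functor C D) (X : C) :
  farr F (idarr X) = idarr (F X).
Proof. by rewrite /farr /idarr /= fmor_id. Qed.

Section Nested.
Variables (N : Category) (n : nat) (G : Functor N (ordinal_category n)).
Hypothesis hG : forall a : Arr N, is_flag a -> is_flag (farr G a).

Lemma ord_id (i j : 'I_n) (p : @Hom (ordinal_category n) i j) :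
  i = j -> is_identity (arr p).
Proof.
move=> e; subst j; exists (i : Obj (ordinal_category n)).
have -> : p = @idm (ordinal_category n) i by apply: eq_irrelevance.
by [].
Qed.

Lemma G_le (A B : N) (f : Hom A B) : (G A <= G B)%N.
Proof. exact: (fmor G f). Qed.

Lemma G_strict (A B : N) (f : Hom A B) : A <> B -> (G A < G B)%N.
Proof.
move=> ne; have le := G_le f; rewrite ltn_neqAle le andbT; apply/eqP => eG.
have eo : G A = G B by apply: val_inj.
have := hG (@arr_flag _ _ _ f ne); apply.
exact: (ord_id (fmor G f) eo).
Qed.

Lemma endo_id (A : N) (f : Hom A A) : f = idm A.
Proof.
case: (classic (is_identity (arr f))) => [[Z e]|nf].
- have e1 := f_equal (fun x : Arr N => (projT1 x).1) e.
  rewrite /= in e1; subst Z. exact: arr_inj e.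
- case: (hG nf). exact: (ord_id (fmor G f) erefl).
Qed.

Lemma endo_arr (A B : N) (f : Hom A B) : A = B -> arr f = idarr A.
Proof. move=> e; subst B; by rewrite (endo_id f). Qed.

Lemma flag_ne (A B : N) (f : Hom A B) : is_flag (arr f) -> A <> B.
Proof. move=> fl e; subst B; apply: fl; exists A; by rewrite (endo_id f). Qed.

Lemma antisym_tr (A B A' B' : N) : Hom A B -> Hom B' A' -> B' = B -> A' = A -> A = B.
Proof.
move=> f g e1 e2; subst; apply: NNPP => ne.
have := G_strict f ne; have := G_le g. lia.
Qed.

End Nested.

Definition incl (C D : Category) (F : Functor C D) (X : D) : Functor (fiber F X) C.
Proof.
refine {| fobj := fun a : Obj (fiber F X) => @proj1_sig C (fun A => F A = X) a;
          fmor := fun a b (u : @Hom (fiber F X) a b) => @proj1_sig _ _ u |}.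
- by move=> *.
- by move=> *.
Defined.

Lemma fiber_flag (C D : Category) (F : Functor C D) (X : D) (x : Arr (fiber F X)) :
  is_flag x -> is_flag (farr (incl F X) x).
Proof.
move=> fx [Z e]; apply: fx.
case: x e => [[a b] u] /= e.
have e1 := f_equal (fun y : Arr C => (projT1 y).1) e.
have e2 := f_equal (fun y : Arr C => (projT1 y).2) e.
rewrite /= in e1 e2.
have eab : a = b by apply: sig_eq_irr; rewrite e1 e2.
subst b; subst Z.
have eu : u = idm a by apply: sig_eq_irr; exact: arr_inj e.
exists a; by rewrite eu.
Qed.

Lemma nested_fiber (C D : Category) (F : Functor C D) (X : D) :
  nested_graph C -> nested_graph (fiber F X).
Proof.
move=> [n [G hG]]; exists n, (functor_comp G (incl F X)) => x fx.
exact: (hG _ (fiber_flag fx)).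
Qed.

Section Main.
Variables (N1 N2 : Category) (phi : Functor N1 N2).
Variables (n1 : nat) (G1 : Functor N1 (ordinal_category n1)).
Variables (n2 : nat) (G2 : Functor N2 (ordinal_category n2)).
Hypothesis hG1 : forall a : Arr N1, is_flag a -> is_flag (farr G1 a).
Hypothesis hG2 : forall a : Arr N2, is_flag a -> is_flag (farr G2 a).
Hypothesis adm : admissible phi.
Hypothesis epi : epi_functor phi.

Definition fv (A : N1) : Prop := forall (B : N1) (f : Hom A B), phi B = phi A -> B = A.
Definition Rq (A B : N1) : Prop := A = B \/ (fv A /\ fv B /\ phi A = phi B).

Lemma surj (X : N2) : exists A, phi A = X.
Proof.
suff H : forall a : Arr N2, generated phi a -> exists A, phi A = dom a.
  by have [A e] := H _ (epi (idarr X)); exists A.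
move=> a; elim=> [b| A B D g f _ _ _ IH]; first by exists (dom b).
exact: IH.
Qed.

Lemma not_fv A : ~ fv A -> exists B (f : Hom A B), phi B = phi A /\ B <> A.
Proof.
move=> h; apply: NNPP => hn; apply: h => B f e.
apply: NNPP => ne; apply: hn; by exists B, f.
Qed.

Lemma fv_exists X : exists V, fv V /\ phi V = X.
Proof.
have [A eA] := surj X.
suff : forall k A, n1 - G1 A <= k -> phi A = X -> exists V, fv V /\ phi V = X.
  by move/(_ _ A (leqnn _) eA).
elim=> [|k IH] A' hk hX; case: (classic (fv A')) => hf; try by exists A'.
- have [B [f [e ne]]] := not_fv hf.
  have lt := G_strict hG1 f (nesym ne).
  have := ltn_ord (G1 B). lia.
- have [B [f [e ne]]] := not_fv hf.
  have lt := G_strict hG1 f (nesym ne).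
  have := ltn_ord (G1 B) => ?.
  apply: (IH B); [lia | by rewrite e].
Qed.

Definition rep (X : N2) (h : exists V, fv V /\ phi V = X) : N1 :=
  proj1_sig (constructive_indefinite_description _ h).
Lemma rep_spec X h : fv (@rep X h) /\ phi (@rep X h) = X.
Proof. exact: (proj2_sig (constructive_indefinite_description _ h)). Qed.
Lemma rep_irr X Y h h' : X = Y -> @rep X h = @rep Y h'.
Proof. move=> e; subst Y; by rewrite (proof_irrelevance _ h h'). Qed.

Definition canon (A : N1) : N1 :=
  match dec (fv A) with
  | left h => @rep (phi A) (ex_intro (fun V => fv V /\ phi V = phi A) A (conj h erefl))
  | right _ => A
  end.

Lemma canon_phi A : phi (canon A) = phi A.
Proof. rewrite /canon; case: dec => h //; exact: (rep_spec _).2. Qed.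

Lemma canon_nfv A : ~ fv A -> canon A = A.
Proof. rewrite /canon; case: dec => // h /(_ h) []. Qed.

Lemma canon_fvE A : fv (canon A) <-> fv A.
Proof.
rewrite /canon; case: dec => h; split=> // _; exact: (rep_spec _).1.
Qed.

Lemma canon_R A B : Rq A B -> canon A = canon B.
Proof.
case=> [->//|[ha [hb e]]].
rewrite /canon; case: (dec (fv A)) => h1; last by [].
case: (dec (fv B)) => h2; last by [].
exact: rep_irr.
Qed.

Lemma Rq_canon A : Rq A (canon A).
Proof.
case: (classic (fv A)) => h.
- right; split=> //; split; [exact/canon_fvE | by rewrite canon_phi].
- by left; rewrite canon_nfv.
Qed.

Lemma canon_idem A : canon (canon A) = canon A.
Proof. exact: (esym (canon_R (Rq_canon A))). Qed.

Lemma Rq_equiv : is_equivalence Rq.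
Proof.
split; first by move=> x; left.
split.
- move=> x y [->|[a [b e]]]; [by left | by right].
- move=> x y z [->//|[a [b e]]] [<-|[b' [c e']]]; first by right.
  by right; split=> //; split=> //; rewrite e.
Qed.

Definition Ob := {A : N1 | canon A = A}.
Definition proper (a : Arr N1) := dom a <> cod a.

Lemma proper_flag a : proper a -> is_flag a.
Proof. case: a => [[A B] f]; exact: arr_flag. Qed.

Lemma comp_proper a b : proper a -> proper b -> cod a = dom b -> proper (comp_arr b a).
Proof.
move=> pa pb e; move: pa pb; have [A [B [D [f [g [-> ->]]]]]] := arr_decomp2 e.
rewrite comp_arr_arr /proper /dom /cod /= => pa pb eAD.
have l1 := G_strict hG1 f pa; have l2 := G_strict hG1 g pb.
subst D. lia.
Qed.

Definition fuse1 (a : Arr N1) (l : seq (Arr N1)) : seq (Arr N1) :=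
  match l with
  | [::] => [:: a]
  | b :: l' => if dec (cod a = dom b) then comp_arr b a :: l' else a :: b :: l'
  end.

Fixpoint cf (l1 l2 : seq (Arr N1)) : seq (Arr N1) :=
  match l1 with
  | [::] => l2
  | a :: l1' => match l1' with [::] => fuse1 a l2 | _ :: _ => a :: cf l1' l2 end
  end.

Lemma fuse1_eq a b l : cod a = dom b -> fuse1 a (b :: l) = comp_arr b a :: l.
Proof. by rewrite /=; case: dec. Qed.
Lemma fuse1_ne a b l : cod a <> dom b -> fuse1 a (b :: l) = a :: b :: l.
Proof. by rewrite /=; case: dec. Qed.

Lemma fuse1_head a l : exists c l', fuse1 a l = c :: l' /\ dom c = dom a.
Proof.
case: l => [|b l]; first by exists a, [::].
case: (dec (cod a = dom b)) => e.
- rewrite fuse1_eq //; exists (comp_arr b a), l; split=> //; exact: comp_dom.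
- rewrite fuse1_ne //; by exists a, (b :: l).
Qed.

Lemma cf_head a l l2 : exists c l', cf (a :: l) l2 = c :: l' /\ dom c = dom a.
Proof. case: l => [|a' l] /=; [exact: fuse1_head | by exists a, (cf (a' :: l) l2)]. Qed.

Lemma cf_nil_r l : cf l [::] = l.
Proof.
elim: l => [|a l IH] //; case: l IH => [|a' l] IH //.
change (a :: cf (a' :: l) [::] = a :: a' :: l); by rewrite IH.
Qed.

Lemma cf_assoc l1 l2 l3 : cf (cf l1 l2) l3 = cf l1 (cf l2 l3).
Proof.
elim: l1 => [|a l1 IH] //.
case: l1 IH => [|a' l1] IH.
- rewrite /=; clear IH.
  case: l2 => [|b l2] //.
  case: l2 => [|b' l2].
  + change (cf (fuse1 a [:: b]) l3 = fuse1 a (fuse1 b l3)).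
    case: (dec (cod a = dom b)) => e.
    * rewrite fuse1_eq //; change (fuse1 (comp_arr b a) l3 = fuse1 a (fuse1 b l3)).
      case: l3 => [|c l3]; first by change ([:: comp_arr b a] = fuse1 a [:: b]); rewrite fuse1_eq.
      case: (dec (cod b = dom c)) => e2.
      -- have e' : cod a = dom (comp_arr c b) by rewrite comp_dom.
         have e'' : cod (comp_arr b a) = dom c by rewrite comp_cod.
         rewrite (fuse1_eq l3 e2) (fuse1_eq l3 e') (fuse1_eq l3 e'').
         by rewrite comp_assoc.
      -- rewrite (fuse1_ne l3 e2) (fuse1_eq (c :: l3) e) fuse1_ne //.
         by rewrite comp_cod.
    * rewrite fuse1_ne //; change (a :: fuse1 b l3 = fuse1 a (fuse1 b l3)).
      have [c [l' [-> ec]]] := fuse1_head b l3.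
      by rewrite fuse1_ne // ec.
  + rewrite [cf (b :: b' :: l2) l3]/=.
    case: (dec (cod a = dom b)) => e.
    * by rewrite !fuse1_eq.
    * by rewrite !fuse1_ne.
- have [c [l' [e1 _]]] := cf_head a' l1 l2.
  change (cf (a :: cf (a' :: l1) l2) l3 = a :: cf (a' :: l1) (cf l2 l3)).
  rewrite e1; change (a :: cf (c :: l') l3 = a :: cf (a' :: l1) (cf l2 l3)).
  by rewrite -e1 IH.
Qed.

Definition sep (a : Arr N1) (l : seq (Arr N1)) : Prop :=
  match l with [::] => True | b :: _ => cod a <> dom b end.

Fixpoint wfl (X : N1) (l : seq (Arr N1)) (Y : N1) : Prop :=
  match l with
  | [::] => X = Y
  | a :: l' => canon (dom a) = X /\ proper a /\ sep a l' /\ wfl (canon (cod a)) l' Y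
  end.

Lemma wfl_cf l1 l2 X Y Z : wfl X l1 Y -> wfl Y l2 Z -> wfl X (cf l1 l2) Z.
Proof.
elim: l1 X => [|a l1 IH] X /=; first by move=> ->.
case: l1 IH => [|a' l1] IH.
- clear IH; case=> w1 [w2 [_ w4]]; case: l2 => [|b l2]; first by rewrite /=; move=> <-.
  case=> v1 [v2 [v3 v4]]; change (wfl X (fuse1 a (b :: l2)) Z).
  case: (dec (cod a = dom b)) => e.
  + rewrite fuse1_eq //=; split; first by rewrite comp_dom.
    split; first exact: comp_proper.
    by rewrite /sep comp_cod //; split.
  + rewrite fuse1_ne //=; split=> //; split=> //; split=> //.
    by rewrite w4.
- case=> w1 [w2 [w3 w4]] v.
  have [c [l' [e1 e2]]] := cf_head a' l1 l2.
  have h := IH _ w4 v; rewrite e1 in h.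
  change (wfl X (a :: cf (a' :: l1) l2) Z); rewrite e1.
  split=> //; split=> //; split=> //; by rewrite /= e2.
Qed.

Definition Hom' (P Q : Ob) := {l : seq (Arr N1) | wfl (proj1_sig P) l (proj1_sig Q)}.

Definition N2' : Category.
Proof.
refine {| Obj := Ob; Hom := Hom';
          idm := fun P => exist _ [::] (erefl (proj1_sig P));
          cmp := fun P Q S (g : Hom' Q S) (f : Hom' P Q) =>
            exist _ (cf (proj1_sig f) (proj1_sig g)) (wfl_cf (proj2_sig f) (proj2_sig g)) |}.
- by move=> P Q f; apply: sig_eq_irr; rewrite /= cf_nil_r.
- by move=> P Q f; apply: sig_eq_irr.
- by move=> P Q S T h g f; apply: sig_eq_irr; rewrite /= cf_assoc.
Defined.

Definition muO (A : N1) : Ob := exist _ (canon A) (canon_idem A).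
Definition mul (A B : N1) (f : Hom A B) : seq (Arr N1) :=
  if dec (A = B) then [::] else [:: arr f].

Lemma mul_id A (f : Hom A A) : mul f = [::].
Proof. by rewrite /mul; case: dec. Qed.
Lemma mul_ne A B (f : Hom A B) : A <> B -> mul f = [:: arr f].
Proof. by rewrite /mul; case: dec. Qed.

Lemma mul_wf A B (f : Hom A B) : wfl (canon A) (mul f) (canon B).
Proof. rewrite /mul; case: dec => [e|ne] /=; [by rewrite e | by []]. Qed.

Definition mu : Functor N1 N2'.
Proof.
refine {| fobj := fun A => (muO A : Obj N2');
          fmor := fun A B f => (exist _ (mul f) (mul_wf f) : @Hom N2' (muO A) (muO B)) |}.
- by move=> A; apply: sig_eq_irr; rewrite /= mul_id.
- move=> A B D g f; apply: sig_eq_irr => /=.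
  case: (classic (A = B)) => [eAB|nAB].
    subst B; by rewrite (endo_id hG1 f) cmp_id_r mul_id.
  case: (classic (B = D)) => [eBD|nBD].
    subst D; by rewrite (endo_id hG1 g) cmp_id_l mul_id cf_nil_r.
  have nAD : A <> D.
    move=> eAD; subst D.
    have := G_strict hG1 f nAB; have := G_strict hG1 g nBD; lia.
  rewrite !mul_ne //.
  change ([:: arr (cmp g f)] = fuse1 (arr f) [:: arr g]).
  by rewrite fuse1_eq // comp_arr_arr.
Defined.

Definition lst (x : Arr N2') : seq (Arr N1) :=
  @proj1_sig _ (fun l => wfl (proj1_sig (projT1 x).1) l (proj1_sig (projT1 x).2)) (projT2 x).

Lemma lst_wf (x : Arr N2') : wfl (proj1_sig (dom x)) (lst x) (proj1_sig (cod x)).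
Proof. exact: (proj2_sig (projT2 x)). Qed.

Lemma arr_ext (x y : Arr N2') :
  proj1_sig (dom x) = proj1_sig (dom y) -> proj1_sig (cod x) = proj1_sig (cod y) ->
  lst x = lst y -> x = y.
Proof.
case: x => [[P Q] [l w]]; case: y => [[P' Q'] [l' w']].
rewrite /dom /cod /lst /= => e1 e2 e3.
have eP : P = P' by apply: sig_eq_irr.
have eQ : Q = Q' by apply: sig_eq_irr.
subst P' Q' l'.
by rewrite (proof_irrelevance _ w w').
Qed.

Lemma flag_lst1 (x : Arr N2') : is_flag x -> lst x <> [::].
Proof.
move=> fx el; apply: fx; exists (dom x).
apply: arr_ext => //.
have := lst_wf x; rewrite el /=; by move=> <-.
Qed.

Lemma flag_lst2 (x : Arr N2') : lst x <> [::] -> is_flag x.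
Proof. by move=> ne [Z e]; apply: ne; rewrite e. Qed.

Lemma mul_proj (a : Arr N1) : proper a -> mul (projT2 a) = [:: a].
Proof. case: a => [[A B] f] /= h; exact: mul_ne. Qed.

Lemma fuse1_sep a l : sep a l -> fuse1 a l = a :: l.
Proof. case: l => [|b l] // h; by rewrite fuse1_ne. Qed.

Lemma split_arr (x : Arr N2') a l : lst x = a :: l ->
  exists rest : @Hom N2' (muO (cod a)) (cod x),
    lst (arr rest) = l /\ x = arr (cmp rest (fmor mu (projT2 a))).
Proof.
case: x => [[P Q] [l0 w]]; rewrite /lst /= => e; subst l0.
have [w1 [w2 [w3 w4]]] := w.
exists (exist _ l w4); split=> //.
apply: arr_ext.
- exact: (esym w1).
- by [].
- rewrite /lst /=.
  have -> : mul (projT2 a) = [:: a] by exact: mul_proj.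
  change (a :: l = fuse1 a l); by rewrite fuse1_sep.
Qed.

Lemma epi_mu : epi_functor mu.
Proof.
case=> [[P Q] c]; case: c => l w.
elim: l P w => [|a l IH] P w.
- have eP : P = Q by apply: sig_eq_irr.
  subst Q.
  have -> : w = erefl by apply: proof_irrelevance.
  have eP' : (mu (proj1_sig P) : Obj N2') = P by apply: sig_eq_irr; exact: (proj2_sig P).
  have := gen_img mu (idarr (proj1_sig P)); rewrite farr_id eP'.
  by [].
- pose x : Arr N2' := existT _ (P, Q) (exist _ (a :: l) w : @Hom N2' P Q).
  change (generated mu x).
  have [rest [hl ex]] := @split_arr x a l erefl.
  rewrite ex; clear ex; apply: gen_cmp; last exact: (gen_img mu a).
  move: rest hl; rewrite /x /=; case=> l' w'; rewrite /lst /= => hl; subst l'.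
  exact: IH.
Qed.

Lemma functor_eq_mu (E : Category) (F1 F2 : Functor N2' E) :
  (forall a, farr F1 (farr mu a) = farr F2 (farr mu a)) -> functor_eq F1 F2.
Proof.
move=> h x; have g := epi_mu x; elim: g => [a|A B D g f _ IHg _ IHf]; first exact: h.
by rewrite !farr_arr_cmp IHg IHf.
Qed.

Section Lift.
Variables (E : Category) (H : Functor N1 E).
Hypothesis hH : forall A B, Rq A B -> H A = H B.

Lemma H_canon A : H (canon A) = H A.
Proof. symmetry; apply: hH; exact: Rq_canon. Qed.

Fixpoint foldE (X : E) (l : seq (Arr N1)) : Arr E :=
  match l with
  | [::] => idarr X
  | a :: l' => comp_arr (foldE (H (cod a)) l') (farr H a)
  end.

Lemma foldE_ends l X Y : wfl X l Y -> dom (foldE (H X) l) = H X /\ cod (foldE (H X) l) = H Y.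
Proof.
elim: l X => [|a l IH] X /=; first by move=> ->.
case=> w1 [w2 [w3 w4]].
have [d c] := IH _ w4; rewrite H_canon in d c.
split.
- rewrite comp_dom ?d //; rewrite -w1 H_canon; by [].
- by rewrite comp_cod ?d.
Qed.

Lemma foldE_cf l1 l2 X Y Z : wfl X l1 Y -> wfl Y l2 Z ->
  foldE (H X) (cf l1 l2) = comp_arr (foldE (H Y) l2) (foldE (H X) l1).
Proof.
elim: l1 X => [|a l1 IH] X w1 w2.
- rewrite /= in w1; subst Y.
  have [d _] := foldE_ends w2. by rewrite comp_idr.
- case: l1 IH w1 => [|a' l1] IH w1.
  + clear IH; case: w1 => w11 [w12 [_ w14]].
    have fa : foldE (H X) [:: a] = farr H a by rewrite /= comp_idl.
    rewrite fa.
    case: l2 w2 => [|b l2] w2.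
    * rewrite /= in w2; subst Z.
      change (foldE (H X) [:: a] = comp_arr (idarr (H Y)) (farr H a)).
      rewrite fa comp_idl //; rewrite -w14 H_canon; by [].
    * case: w2 => [v1 [v2 [v3 v4]]].
      have [d c] := foldE_ends v4; rewrite H_canon in d c.
      change (foldE (H X) (fuse1 a (b :: l2)) =
              comp_arr (foldE (H Y) (b :: l2)) (farr H a)).
      case: (dec (cod a = dom b)) => e.
      -- rewrite fuse1_eq //.
         change (comp_arr (foldE (H (cod (comp_arr b a))) l2) (farr H (comp_arr b a)) =
                 comp_arr (comp_arr (foldE (H (cod b)) l2) (farr H b)) (farr H a)).
         rewrite farr_comp // comp_cod // comp_assoc //.
         change (H (cod a) = H (dom b)); by rewrite e.
      -- by rewrite fuse1_ne.
  + case: w1 => w11 [w12 [w13 w14]].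
    have {}w14 : wfl (canon (cod a)) (a' :: l1) Y := w14.
    have h := IH _ w14 w2; rewrite H_canon in h.
    have [d c] := foldE_ends w14; rewrite H_canon in d c.
    have [d2 _] := foldE_ends w2.
    change (comp_arr (foldE (H (cod a)) (cf (a' :: l1) l2)) (farr H a) =
            comp_arr (foldE (H Y) l2) (comp_arr (foldE (H (cod a)) (a' :: l1)) (farr H a))).
    rewrite h comp_assoc //; by rewrite c d2.
Qed.

Definition hom_of (a : Arr E) (X Y : E) (e : projT1 a = (X, Y)) : Hom X Y :=
  eq_rect (projT1 a) (fun p => Hom p.1 p.2) (projT2 a) (X, Y) e.

Lemma arr_hom_of (a : Arr E) X Y (e : projT1 a = (X, Y)) : arr (hom_of e) = a.
Proof. case: a e => p f /= e; subst p; by []. Qed.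

Lemma ends_pair X l Y (w : wfl X l Y) : projT1 (foldE (H X) l) = (H X, H Y).
Proof.
have [d c] := foldE_ends w; move: d c; rewrite /dom /cod.
case: (projT1 _) => u v /= -> ->; by [].
Qed.

Definition liftF : Functor N2' E.
Proof.
refine {| fobj := fun P : Obj N2' => H (proj1_sig (P : Ob));
          fmor := fun P Q (c : @Hom N2' P Q) => hom_of (ends_pair (proj2_sig c)) |}.
- move=> P; apply: arr_inj; by rewrite arr_hom_of.
- move=> P Q S g f; apply: arr_inj.
  rewrite arr_hom_of -comp_arr_arr !arr_hom_of /=.
  exact: foldE_cf (proj2_sig f) (proj2_sig g).
Defined.

Lemma lift_mu : functor_eq (functor_comp liftF mu) H.
Proof.
case=> [[A B] f].
rewrite /farr /= arr_hom_of.
case: (classic (A = B)) => [e|ne].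
- subst B; rewrite mul_id (endo_id hG1 f) fmor_id /= H_canon; by [].
- rewrite mul_ne //= comp_idl //.
Qed.

Lemma lift_uniq (G' : Functor N2' E) :
  functor_eq (functor_comp G' mu) H -> functor_eq G' liftF.
Proof.
move=> hG'; apply: functor_eq_mu => a.
exact: (etrans (hG' a) (esym (lift_mu a))).
Qed.

End Lift.
Lemma phi_Rq A B : Rq A B -> phi A = phi B.
Proof. case=> [->//|[_ [_ e]]]; exact: e. Qed.

Definition kappa : Functor N2' N2 := liftF phi_Rq.

Lemma kmu a : farr kappa (farr mu a) = farr phi a.
Proof. exact: (lift_mu phi_Rq a). Qed.

Lemma lst_mu A B (f : Hom A B) : lst (farr mu (arr f)) = mul f.
Proof. by []. Qed.

Lemma lst_cmp (P Q S : N2') (g : Hom Q S) (f : Hom P Q) :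
  lst (arr (cmp g f)) = cf (lst (arr f)) (lst (arr g)).
Proof. by []. Qed.

Lemma cf_single l1 l2 z : l1 <> [::] -> l2 <> [::] -> cf l1 l2 = [:: z] ->
  exists x y, l1 = [:: x] /\ l2 = [:: y] /\ cod x = dom y /\ z = comp_arr y x.
Proof.
case: l1 => [|x l1] // _; case: l2 => [|y l2] // _.
case: l1 => [|x' l1].
- have -> : cf [:: x] (y :: l2) = fuse1 x (y :: l2) by [].
  case: (dec (cod x = dom y)) => e.
  + rewrite fuse1_eq //; case=> <- ->; by exists x, y.
  + by rewrite fuse1_ne.
- have -> : cf [:: x, x' & l1] (y :: l2) = x :: cf (x' :: l1) (y :: l2) by [].
  have [c [l' [-> _]]] := cf_head x' l1 (y :: l2). by [].
Qed.

Lemma mu_adm : admissible mu.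
Proof.
split.
- case=> [[A B] f] [fl nc]; right.
  have ne : A <> B := flag_ne hG1 fl.
  split; first by apply: flag_lst2; rewrite (lst_mu f) mul_ne.
  move=> [P [Q [S [g [h [fg [fh e]]]]]]].
  have el := f_equal lst e.
  rewrite (lst_mu f) mul_ne // lst_cmp in el.
  have [x [y [ex [ey [exy ecomp]]]]] := cf_single (flag_lst1 fh) (flag_lst1 fg) (esym el).
  have wx := lst_wf (arr h); rewrite ex in wx; case: wx => _ [px _].
  have wy := lst_wf (arr g); rewrite ey in wy; case: wy => _ [py _].
  move: ecomp px py; have [A' [B' [D' [f' [g' [-> ->]]]]]] := arr_decomp2 exy.
  rewrite comp_arr_arr => ecomp px py.
  apply: nc; exists A', B', D', g', f'; split; first exact: arr_flag.
  split; first exact: arr_flag.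
  exact: ecomp.
- case=> [[A B] f] [fl _] [Z e].
  exfalso; have ne : A <> B := flag_ne hG1 fl.
  have : is_flag (farr mu (arr f)) by apply: flag_lst2; rewrite (lst_mu f) mul_ne.
  by apply; exists Z.
Qed.

Lemma mu_merger : merger mu.
Proof.
split; first exact: mu_adm.
split; first exact: epi_mu.
exists Rq; split; first exact: Rq_equiv.
split.
- move=> A B r; apply: sig_eq_irr; exact: canon_R.
- move=> E H hH; exists (liftF hH); split; first exact: lift_mu.
  move=> G'; exact: lift_uniq.
Qed.

Lemma irr_N2' (x : Arr N2') : irreducible x -> exists a, irreducible a /\ x = farr mu a.
Proof.
move=> [fx nc].
have := flag_lst1 fx; case el: (lst x) => [|a l] // _.
have w := lst_wf x; rewrite el in w; case: w => w1 [w2 [w3 w4]].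
case: l el w3 w4 => [|b l] el w3 w4.
- have ex : x = farr mu a.
    apply: arr_ext.
    + exact: (esym w1).
    + exact: (esym w4).
    + rewrite el; change ([:: a] = mul (projT2 a)); by rewrite mul_proj.
  exists a; split=> //; split; first exact: proper_flag.
  move=> [A [B [D [g [f [fg [ff ea]]]]]]].
  apply: nc; exists (mu A), (mu B), (mu D), (fmor mu g), (fmor mu f).
  split; first by apply: flag_lst2; rewrite (lst_mu g) (mul_ne g (flag_ne hG1 fg)).
  split; first by apply: flag_lst2; rewrite (lst_mu f) (mul_ne f (flag_ne hG1 ff)).
  rewrite ex ea; exact: (f_equal (@arr N2' _ _) (fmor_cmp mu g f)).
- exfalso; have [rest [hl ex]] := split_arr el.
  apply: nc; exists _, _, _, rest, (fmor mu (projT2 a)).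
  split; first by apply: flag_lst2; rewrite hl.
  split; last exact: ex.
  apply: flag_lst2; change (mul (projT2 a) <> [::]); by rewrite mul_proj.
Qed.

Lemma contr_nfv a : is_flag a -> is_identity (farr phi a) -> ~ fv (dom a).
Proof.
case: a => [[A B] f] /= fl [Z e] fA.
have ne := flag_ne hG1 fl.
have e1 := f_equal (fun y : Arr N2 => (projT1 y).1) e.
have e2 := f_equal (fun y : Arr N2 => (projT1 y).2) e.
rewrite /= in e1 e2.
apply: ne; symmetry; apply: (fA B f); by rewrite e1 e2.
Qed.

Lemma kappa_adm : admissible kappa.
Proof.
split.
- move=> x /irr_N2' [a [ia ->]]. rewrite /contracts kmu. exact: adm.1 a ia.
- move=> x ix cx y iy ed.
  have [a [ia ex]] := irr_N2' ix; have [b [ib ey]] := irr_N2' iy.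
  subst x y; move: cx; rewrite /contracts !kmu => cx.
  apply: (adm.2 a ia cx b ib).
  have ec : canon (dom b) = canon (dom a) := f_equal (@proj1_sig _ _) ed.
  have nfa := contr_nfv ia.1 cx.
  have ca : canon (dom a) = dom a := canon_nfv nfa.
  case: (classic (fv (dom b))) => h.
  + exfalso; apply: nfa; apply/canon_fvE; rewrite -ec; exact/canon_fvE.
  + by rewrite -(canon_nfv h) ec ca.
Qed.

Lemma kappa_epi : epi_functor kappa.
Proof.
move=> y; elim: (epi y) => [a|A B D g f _ IHg _ IHf].
- rewrite -kmu; exact: gen_img.
- exact: gen_cmp.
Qed.

Definition idx (A : N1) : nat :=
  G2 (phi A) * n1.+1 + (if dec (fv A) then n1 else G1 A).

Lemma idx_lt A : idx A < n2 * n1.+1.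
Proof.
rewrite /idx; have hg := ltn_ord (G2 (phi A)); have hh := ltn_ord (G1 A).
have hm : (G2 (phi A)).+1 * n1.+1 <= n2 * n1.+1 by rewrite leq_mul2r hg orbT.
rewrite mulSn in hm.
destruct (dec (fv A)); rewrite /=; lia.
Qed.

Lemma idx_canon A : idx (canon A) = idx A.
Proof.
case: (classic (fv A)) => h; last by rewrite canon_nfv.
have h' : fv (canon A) by apply/canon_fvE.
rewrite /idx canon_phi.
destruct (dec (fv (canon A))) as [|n]; last by case: n.
destruct (dec (fv A)) as [|n]; last by case: n.
by [].
Qed.

Lemma idx_strict A B (f : Hom A B) : A <> B -> idx A < idx B.
Proof.
move=> ne; rewrite /idx.
case: (classic (phi A = phi B)) => e.
- have nfA : ~ fv A by move=> fA; apply: ne; symmetry; apply: (fA B f); rewrite e.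
  have lt := G_strict hG1 f ne; have := ltn_ord (G1 B).
  rewrite e; destruct (dec (fv A)) as [|n0]; first by []. destruct (dec (fv B)); rewrite /=; lia.
- have lt := G_strict hG2 (fmor phi f) e.
  have := ltn_ord (G1 A); have := ltn_ord (G1 B) => hb ha.
  have hm : (G2 (phi A)).+1 * n1.+1 <= G2 (phi B) * n1.+1 by rewrite leq_mul2r lt orbT.
  rewrite mulSn in hm.
  destruct (dec (fv A)); destruct (dec (fv B)); rewrite /=; lia.
Qed.

Lemma idx_proper a : proper a -> idx (dom a) < idx (cod a).
Proof. case: a => [[A B] f] /= h; exact: idx_strict f h. Qed.

Lemma chain_mono l X Y : wfl X l Y -> idx X <= idx Y /\ (l <> [::] -> idx X < idx Y).
Proof.
elim: l X => [|a l IH] X /=; first by move=> ->.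
case=> w1 [w2 [_ w4]].
have [h1 _] := IH _ w4.
have s := idx_proper w2.
rewrite idx_canon in h1; rewrite -w1 idx_canon.
split; [lia | move=> _; lia].
Qed.

Definition GN2' : Functor N2' (ordinal_category (n2 * n1.+1)).
Proof.
refine {| fobj := fun P : Obj N2' => (Ordinal (idx_lt (proj1_sig (P : Ob))) : Obj (ordinal_category (n2 * n1.+1)));
          fmor := fun P Q (c : @Hom N2' P Q) => (chain_mono (proj2_sig c)).1 |}.
- by move=> *; apply: eq_irrelevance.
- by move=> *; apply: eq_irrelevance.
Defined.

Lemma nested_N2' : nested_graph N2'.
Proof.
exists (n2 * n1.+1), GN2' => x fx.
have ne := flag_lst1 fx.
have := (chain_mono (lst_wf x)).2 ne.
case: x fx ne => [[P Q] c] _ _ /= lt.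
apply: arr_flag => e.
have := f_equal (@nat_of_ord _) e; rewrite /= => e'.
rewrite e' in lt; by rewrite ltnn in lt.
Qed.

Lemma kappa_corolla X : corolla (fiber kappa X).
Proof.
split; first exact: nested_fiber nested_N2'.
have [V [fvV eV]] := fv_exists X.
have e0 : kappa (muO V) = X by rewrite /= canon_phi.
exists (exist _ (muO V) e0 : Obj (fiber kappa X)).
split.
- move=> x ex fx.
  have fu := flag_lst1 (fiber_flag fx).
  case: x ex fx fu => [[a b] u]; rewrite /dom /= => ex _; subst a.
  case el : (lst _) => [|a1 l] // _.
  have [rest [hl erest]] := split_arr el.
  have w := lst_wf (arr (proj1_sig u)); rewrite el in w; case: w => w1 [w2 _].
  rewrite /= in w1.
  have fa1 : fv (dom a1) by apply/canon_fvE; rewrite w1; exact/canon_fvE.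
  have pa1 : phi (dom a1) = X by rewrite -canon_phi w1 canon_phi.
  have eb := proj2_sig b.
  have e_phi : phi (dom a1) = phi (cod a1).
    apply: (antisym_tr hG2 (fmor phi (projT2 a1)) (fmor kappa rest)).
    + by rewrite /= canon_phi.
    + change (kappa (proj1_sig b) = phi (dom a1)); by rewrite eb pa1.
  by apply: w2; symmetry; apply: (fa1 _ (projT2 a1)); rewrite e_phi.
- move=> bb hv.
  have hX : phi (proj1_sig (proj1_sig bb)) = X := proj2_sig bb.
  have cA := proj2_sig (proj1_sig bb).
  set A := proj1_sig (proj1_sig bb) in hX cA.
  have fA : fv A.
    apply: NNPP => nf; have [B [f [eB ne]]] := not_fv nf.
    have eA' : kappa (muO A) = X by rewrite /= canon_phi.
    have eB' : kappa (muO B) = X by rewrite /= canon_phi eB.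
    have pu : arr (fmor kappa (fmor mu f)) = idarr X.
      have := kmu (arr f); rewrite /farr /= => ->.
      rewrite (endo_arr hG2 (fmor phi f) (esym eB)); by rewrite hX.
    pose u : @Hom (fiber kappa X) (exist _ (muO A) eA') (exist _ (muO B) eB') :=
      exist _ (fmor mu f) pu.
    apply: (hv (arr u)).
    + apply: sig_eq_irr; apply: sig_eq_irr; exact: cA.
    + move=> [Z eZ].
      have : is_flag (arr (fmor mu f)).
        apply: flag_lst2; rewrite (lst_mu f) mul_ne //; exact: nesym.
      apply; exists (proj1_sig Z).
      have := f_equal (farr (incl kappa X)) eZ; rewrite farr_id; exact.
  have eAV : A = canon V.
    rewrite -cA; apply: canon_R; right; split=> //; split=> //; by rewrite hX eV.
  apply: sig_eq_irr; apply: sig_eq_irr; exact: eAV.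
Qed.

Lemma kappa_contraction : contraction kappa.
Proof. split; [exact: kappa_adm | split; [exact: kappa_epi | exact: kappa_corolla]]. Qed.

Lemma phi_eq : functor_eq phi (functor_comp kappa mu).
Proof. move=> a; exact: (esym (kmu a)). Qed.
End Main.

Theorem mainTheorem3 (N1 N2 : Category) (phi : Functor N1 N2) :
  nested_graph N1 -> nested_graph N2 ->
  admissible phi -> epi_functor phi ->
  exists (N2' : Category) (mu : Functor N1 N2') (kappa : Functor N2' N2),
    nested_graph N2' /\ merger mu /\ contraction kappa /\
    functor_eq phi (functor_comp kappa mu).
Proof.
move=> [n1 [G1 hG1]] [n2 [G2 hG2]] adm ep.
exists (N2' phi hG1), (mu phi hG1), (kappa phi hG1).
split; first exact: (nested_N2' phi hG1 hG2).
split; first exact: (mu_merger phi hG1).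
split; first exact: (kappa_contraction hG1 hG2 adm ep).
exact: (phi_eq phi hG1).
Qed.
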